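(* If $G$ is a tightly closed graph on $[n]$, then $NC_G$ is graded.
   Context: Graphs are finite simple graphs with vertex set $[n]$; edges are written $ij$ with $i<j$. Two edges $a_1a_2$ and $b_1b_2$ cross if $a_1<b_1<a_2<b_2$ or $b_1<a_1<b_2<a_2$. A bond of $G$ is a spanning subgraph (identified with its edge set) each of whose connected components is an induced subgraph of $G$; it is noncrossing if there are no two distinct components with vertex sets $B,B'$ and $a,c\in B$, $b,d\in B'$, $a<b<c<d$. $NC_G$ is the poset of noncrossing bonds ordered by inclusion of edge sets. Two crossing edges $e,f$ are crossing closed if among all induced connected subgraphs of $G$ containing $e$ and $f$ there is a unique minimal one under containment, denoted $J(e,f)$; $G$ is crossing closed if all pairs of crossing edges are. $G$ is tightly closed if it is crossing closed and for all crossing edges $e,f$, $J(e,f)$ is a subgraph of $K_4$. *)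

(* Defs.v *)
From mathcomp Require Import all_boot all_order.
Set Implicit Arguments. Unset Strict Implicit. Unset Printing Implicit Defensive.

(* Vertices [n] are represented by 'I_n = {0,...,n-1} (order-preserving shift).
   A graph / edge set is a set of pairs (i,j) with i < j. *)
Definition edgeset n := {set 'I_n * 'I_n}.

Definition is_graph n (G : edgeset n) : Prop := forall e, e \in G -> e.1 < e.2.

Definition adj n (S : edgeset n) : rel 'I_n :=
  fun u v => ((u, v) \in S) || ((v, u) \in S).

Definition same_comp n (S : edgeset n) (u v : 'I_n) : bool := connect (adj S) u v.

(* S is a bond of G: S is a set of edges of G and each connected component
   of the spanning subgraph ([n], S) is an induced subgraph of G. *)
Definition bond n (G S : edgeset n) : bool :=
  (S \subset G) && [forall e in G, same_comp S e.1 e.2 ==> (e \in S)].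

Definition noncrossing_bond n (G S : edgeset n) : bool :=
  bond G S &&
  [forall a : 'I_n, forall b : 'I_n, forall c : 'I_n, forall d : 'I_n,
     ((a < b) && (b < c) && (c < d)) ==>
     ~~ [&& same_comp S a c, same_comp S b d & ~~ same_comp S a b]].

Definition NC_chain n (G : edgeset n) (C : {set edgeset n}) : bool :=
  [forall S in C, noncrossing_bond G S] &&
  [forall S in C, forall T in C, (S \subset T) || (T \subset S)].

Definition NC_maximal_chain n (G : edgeset n) (C : {set edgeset n}) : bool :=
  NC_chain G C && [forall D : {set edgeset n}, (NC_chain G D && (C \subset D)) ==> (D == C)].

(* Graded: every maximal chain has the same length (length = #|C| - 1). *)
Definition NC_graded n (G : edgeset n) : Prop :=
  forall C1 C2, NC_maximal_chain G C1 -> NC_maximal_chain G C2 -> #|C1| = #|C2|.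

Definition cross n (e f : 'I_n * 'I_n) : bool :=
  [&& e.1 < f.1, f.1 < e.2 & e.2 < f.2] || [&& f.1 < e.1, e.1 < f.2 & f.2 < e.2].

Definition induced_connected n (G : edgeset n) (W : {set 'I_n}) : bool :=
  [forall u in W, forall v in W,
     connect (fun x y => [&& x \in W, y \in W & adj G x y]) u v].

Definition contains_ef n (G : edgeset n) (e f : 'I_n * 'I_n) : pred {set 'I_n} :=
  fun W => [&& induced_connected G W, e.1 \in W, e.2 \in W, f.1 \in W & f.2 \in W].

(* e, f crossing closed: unique minimal such induced connected subgraph
   (its vertex set determines it, as it is induced) *)
Definition crossing_closed_pair n (G : edgeset n) (e f : 'I_n * 'I_n) : Prop :=
  exists! W, minset (contains_ef G e f) W.

Definition crossing_closed n (G : edgeset n) : Prop :=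
  forall e f, e \in G -> f \in G -> cross e f -> crossing_closed_pair G e f.

(* tightly closed: crossing closed and each J(e,f) is a subgraph of K_4,
   i.e. has at most 4 vertices *)
Definition tightly_closed n (G : edgeset n) : Prop :=
  crossing_closed G /\
  forall e f, e \in G -> f \in G -> cross e f ->
    forall W, minset (contains_ef G e f) W -> #|W| <= 4.

(* Main.v *)
Require Import Defs.
From mathcomp Require Import all_boot all_order zify.
Set Implicit Arguments. Unset Strict Implicit. Unset Printing Implicit Defensive.

Definition btwn (u v t : nat) : bool := ((u < t) && (t < v)) || ((v < t) && (t < u)).
Definition crn (u v s t : nat) : bool :=
  [&& s != u, s != v, t != u, t != v & btwn u v s != btwn u v t].

Lemma crn_sym u v s t : crn u v s t -> crn s t u v.
Proof. rewrite /crn /btwn. lia. Qed.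
Lemma crn_swap u v s t : crn u v s t = crn u v t s.
Proof. rewrite /crn /btwn. apply/idP/idP; lia. Qed.
Lemma crn_swap1 u v s t : crn u v s t = crn v u s t.
Proof. rewrite /crn /btwn. apply/idP/idP; lia. Qed.

Lemma N2 m1 m2 l2 l3 a b :
  crn m1 m2 a l2 -> btwn m1 m2 a = btwn m1 m2 b -> b != m1 -> b != m2 ->
  btwn m1 m2 l2 = btwn m1 m2 l3 -> l3 != m1 -> l3 != m2 ->
  a != l2 -> a != l3 -> b != l2 -> b != l3 -> btwn l2 l3 a = btwn l2 l3 b.
Proof. rewrite /crn /btwn. lia. Qed.

Lemma N3 m1 m2 l2 l3 a :
  crn m1 m2 a l2 -> btwn m1 m2 l2 = btwn m1 m2 l3 -> l3 != m1 -> l3 != m2 ->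
  btwn l2 l3 m1 = btwn l2 l3 m2 -> m1 != l2 -> m1 != l3 -> m2 != l2 -> m2 != l3 ->
  a != l2 -> a != l3 -> btwn l2 l3 a = btwn l2 l3 m1.
Proof. rewrite /crn /btwn. lia. Qed.

Lemma quad_crn (a b c d : nat) : a < b -> b < c -> c < d -> crn a c b d && crn b d a c.
Proof. rewrite /crn /btwn => *; lia. Qed.

Lemma edge_cut (T : finType) (e : rel T) (P : pred T) x y :
  connect e x y -> P x -> ~~ P y ->
  exists u v, [/\ connect e x u, e u v, P u & ~~ P v].
Proof.
move=> /connectP[p pth ->]; elim: p x pth => [|z p IH] x /=; first by move=> _ ->.
case/andP=> exz pz Px Py.
case Pz: (P z).
  have [u [v [c1 e1 P1 P2]]] := IH z pz Pz Py.
  exists u, v; split=> //; apply: connect_trans c1; exact: connect1.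
by exists x, z; rewrite connect0 Pz.
Qed.

Lemma connect_equiv (T : finType) (e : rel T) (r : rel T) x y :
  (forall u, r u u) -> (forall u v w, r u v -> r v w -> r u w) ->
  (forall u v, e u v -> r u v) -> connect e x y -> r x y.
Proof.
move=> rr rt er /connectP[p pth ->]; elim: p x pth => [|z p IH] x /=; first by [].
case/andP=> exz pz; apply: rt (er _ _ exz) (IH _ pz).
Qed.


Lemma adj_sym n (S : edgeset n) : symmetric (adj S).
Proof. by move=> u v; rewrite /adj orbC. Qed.

Lemma sc_refl n (S : edgeset n) u : same_comp S u u.
Proof. exact: connect0. Qed.
Lemma sc_sym n (S : edgeset n) u v : same_comp S u v = same_comp S v u.
Proof. rewrite /same_comp; apply: sym_connect_sym; exact: adj_sym. Qed.
Lemma sc_trans n (S : edgeset n) u v w :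
  same_comp S u v -> same_comp S v w -> same_comp S u w.
Proof. exact: connect_trans. Qed.
Lemma sc_adj n (S : edgeset n) u v : adj S u v -> same_comp S u v.
Proof. exact: connect1. Qed.

Lemma sc_mono n (S T : edgeset n) u v :
  S \subset T -> same_comp S u v -> same_comp T u v.
Proof.
move=> /subsetP sST; apply: connect_sub => a b /orP[] h; apply: connect1;
  rewrite /adj ?(sST _ h) ?orbT //.
Qed.

Lemma bond_sub n (G S T : edgeset n) :
  bond G S -> bond G T -> (forall u v, same_comp S u v -> same_comp T u v) ->
  S \subset T.
Proof.
case/andP=> /subsetP SG _ /andP[_ /forall_inP bT] h; apply/subsetP=> e eS.
apply: (implyP (bT e (SG _ eS))); apply: h; apply: sc_adj; by rewrite /adj -surjective_pairing eS.
Qed.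

Lemma crn_cross n (u v s t : 'I_n) : u < v -> s < t -> crn u v s t -> cross (u, v) (s, t).
Proof. by move=> uv st; rewrite /cross /crn /btwn /=; lia. Qed.

Lemma crn_neq n (u v s t : 'I_n) : crn u v s t -> [&& s != u, s != v, t != u & t != v].
Proof. by rewrite /crn -!val_eqE /=; lia. Qed.

Lemma lt_neq n (u v : 'I_n) : u < v -> u != v.
Proof. by rewrite -val_eqE /=; lia. Qed.

Lemma tc_edge0 n (G : edgeset n) (u v s t : 'I_n) : tightly_closed G ->
  (u, v) \in G -> (s, t) \in G -> u < v -> s < t -> crn u v s t ->
  [|| adj G u s, adj G u t, adj G v s | adj G v t].
Proof.
move=> [cc tight] eG fG uv st cr.
have cef := crn_cross uv st cr.
have [W [mW _]] := cc _ _ eG fG cef.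
have W4 := tight _ _ eG fG cef W mW.
have /and5P[icW uW vW sW tW] := minsetp mW.
have := forall_inP icW u uW => /forall_inP /(_ s sW) Hc.
have /and4P[d3 d4 d5 d6] := crn_neq cr.
have Ps : ~~ ((s == u) || (s == v)) by rewrite negb_or d3 d4.
have [a [b [_ hab Pa Pb]]] := @edge_cut _ _ (fun x => (x == u) || (x == v)) _ _ Hc (introT orP (or_introl (eqxx u))) Ps.
case/and3P: hab => aW bW ab.
have bst : (b == s) || (b == t).
  apply/negPn/negP => nb.
  have : uniq [:: u; v; s; t; b].
    have d1 := lt_neq uv.
    have d2 := lt_neq st.
    move: Pb nb; rewrite negb_or => /andP[d7 d8]; rewrite negb_or => /andP[d9 d10].
    rewrite /= !inE !negb_or d1 d2 (eq_sym u s) d3 (eq_sym u t) d5 (eq_sym u b) d7 (eq_sym v s) d4 (eq_sym v t) d6 (eq_sym v b) d8 (eq_sym s b) d9 (eq_sym t b) d10 //.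
  move/card_uniqP => /= e5.
  have : #|[:: u; v; s; t; b]| <= #|W|.
    apply: subset_leq_card; apply/subsetP=> z.
    by do 4! case/predU1P=> [->//|]; move=> /predU1P[->|].
  by rewrite e5 => h; move: (leq_trans h W4).
by case/orP: Pa => /eqP <-; case/orP: bst => /eqP <-; rewrite ab ?orbT.
Qed.

Lemma tc_edge n (G : edgeset n) (u v s t : 'I_n) : is_graph G -> tightly_closed G ->
  adj G u v -> adj G s t -> crn u v s t ->
  [|| adj G u s, adj G u t, adj G v s | adj G v t].
Proof.
move=> ig tc.
wlog e1 : u v / (u, v) \in G.
  move=> H /orP[h|h] hst cr; first by apply: H => //; rewrite /adj h.
  have a1 : adj G v u by rewrite /adj h.
  have cr' : crn v u s t by rewrite -crn_swap1.
  have := H v u h a1 hst cr'.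
  by rewrite /adj => /or4P[]/orP[]->; rewrite ?orbT.
move=> _.
wlog e2 : s t / (s, t) \in G.
  move=> H /orP[h|h] cr; first by apply: H => //; rewrite /adj h.
  have a1 : adj G t s by rewrite /adj h.
  have cr' : crn u v t s by rewrite -crn_swap.
  have := H t s h a1 cr'.
  by rewrite /adj => /or4P[]/orP[]->; rewrite ?orbT.
move=> _ cr; apply: tc_edge0 => //; [exact: (ig _ e1) | exact: (ig _ e2)].
Qed.

Lemma nc_quad n (G S : edgeset n) (a b c d : 'I_n) : noncrossing_bond G S ->
  a < b -> b < c -> c < d -> same_comp S a c -> same_comp S b d -> same_comp S a b.
Proof.
case/andP=> _ /forallP H ab bc cd ac bd.
move: (H a) => /forallP /(_ b) /forallP /(_ c) /forallP /(_ d).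
by rewrite ab bc cd ac bd /= negbK.
Qed.

Lemma glue n (S : edgeset n) (a b c d : 'I_n) : same_comp S a c -> same_comp S b d ->
  [|| same_comp S a b, same_comp S a d, same_comp S c b, same_comp S c d,
      same_comp S b a, same_comp S d a, same_comp S b c | same_comp S d c] ->
  same_comp S a b.
Proof.
move=> ac bd.
have db : same_comp S d b by rewrite sc_sym.
have ca : same_comp S c a by rewrite sc_sym.
case/orP=> [//|/orP[h|/orP[h|/orP[h|/orP[h|/orP[h|/orP[h|h]]]]]]].
- exact: sc_trans h db.
- exact: sc_trans ac h.
- exact: sc_trans ac (sc_trans h db).
- by rewrite sc_sym.
- by rewrite sc_sym; apply: sc_trans bd h.
- by rewrite sc_sym; apply: sc_trans h ca.
- by rewrite sc_sym; apply: sc_trans bd (sc_trans h ca).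
Qed.


Lemma ord8 (a b c d : nat) : crn a c b d ->
  (a < b /\ b < c /\ c < d) \/ (d < a /\ a < b /\ b < c) \/ (a < d /\ d < c /\ c < b) \/
  (b < a /\ a < d /\ d < c) \/ (c < b /\ b < a /\ a < d) \/ (d < c /\ c < b /\ b < a) \/
  (c < d /\ d < a /\ a < b) \/ (b < c /\ c < d /\ d < a).
Proof. rewrite /crn /btwn => h; lia. Qed.

Lemma nc_cr n (G S : edgeset n) (a b c d : 'I_n) : noncrossing_bond G S ->
  crn a c b d -> same_comp S a c -> same_comp S b d -> same_comp S a b.
Proof.
move=> nc cr ac bd; apply: (@glue n S a b c d ac bd).
have ca : same_comp S c a by rewrite sc_sym.
have db : same_comp S d b by rewrite sc_sym.
case: (ord8 cr) => [[h1 [h2 h3]]|[[h1 [h2 h3]]|[[h1 [h2 h3]]|[[h1 [h2 h3]]|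
   [[h1 [h2 h3]]|[[h1 [h2 h3]]|[[h1 [h2 h3]]|[h1 [h2 h3]]]]]]]]].
- by rewrite (nc_quad nc h1 h2 h3 ac bd).
- by rewrite (nc_quad nc h1 h2 h3 db ac) !orbT.
- by rewrite (nc_quad nc h1 h2 h3 ac db) !orbT.
- by rewrite (nc_quad nc h1 h2 h3 bd ac) !orbT.
- by rewrite (nc_quad nc h1 h2 h3 ca bd) !orbT.
- by rewrite (nc_quad nc h1 h2 h3 db ca) !orbT.
- by rewrite (nc_quad nc h1 h2 h3 ca db) !orbT.
- by rewrite (nc_quad nc h1 h2 h3 bd ca) !orbT.
Qed.

Lemma nsc_neq n (S : edgeset n) (t w z1 z2 : 'I_n) :
  same_comp S t w -> same_comp S z1 z2 -> ~~ same_comp S t z1 ->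
  (nat_of_ord w != z1) && (nat_of_ord w != z2).
Proof.
move=> tw zz ntz; rewrite !val_eqE; apply/andP; split; apply/negP => /eqP ew; subst w.
  by rewrite tw in ntz.
by move: ntz; rewrite (sc_trans tw (sc_trans (sc_refl _ _) _)) // sc_sym.
Qed.

Lemma side_const n (G S : edgeset n) (t t' z1 z2 : 'I_n) : noncrossing_bond G S ->
  same_comp S t t' -> same_comp S z1 z2 -> ~~ same_comp S t z1 ->
  btwn z1 z2 t = btwn z1 z2 t'.
Proof.
move=> nc tt' zz ntz; apply/eqP/negP => ne.
have /andP[n1 n2] := nsc_neq (sc_refl S t) zz ntz.
have /andP[n3 n4] := nsc_neq tt' zz ntz.
have cr : crn z1 z2 t t' by rewrite /crn n1 n2 n3 n4; apply/negP.
by move: ntz; rewrite sc_sym (nc_cr nc cr zz tt').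
Qed.

Lemma crn_of (u v s t : nat) : u < v -> u < s -> s < v -> ~~ ((u < t) && (t < v)) ->
  t != u -> t != v -> crn u v s t.
Proof. rewrite /crn /btwn; lia. Qed.

Lemma tc_sc n (G : edgeset n) (u v s t : 'I_n) : is_graph G -> tightly_closed G ->
  adj G u v -> adj G s t -> crn u v s t -> same_comp G u s.
Proof.
move=> ig tc auv ast cr.
have ts : same_comp G t s by rewrite sc_sym; apply: sc_adj.
have vu : same_comp G v u by rewrite sc_sym; apply: sc_adj.
case/or4P: (tc_edge ig tc auv ast cr) => /sc_adj h //.
- exact: sc_trans h ts.
- exact: sc_trans (sc_adj auv) h.
- exact: sc_trans (sc_adj auv) (sc_trans h ts).
Qed.

Lemma inside n (G : edgeset n) (u v w0 w : 'I_n) : is_graph G -> tightly_closed G ->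
  adj G u v -> u < w0 -> w0 < v -> ~~ same_comp G w0 u -> same_comp G w0 w ->
  (u < w) && (w < v).
Proof.
move=> ig tc auv h1 h2 nw0u w0w; apply/negPn/negP => nw.
have [s [t [w0s ast Ps Pt]]] := @edge_cut _ _ (fun x : 'I_n => (u < x) && (x < v)) _ _ w0w
  (introT andP (conj h1 h2)) nw.
have w0t : same_comp G w0 t := sc_trans w0s (sc_adj ast).
have tu : t != u by apply/negP => /eqP e; subst t; rewrite w0t in nw0u.
have tv : t != v.
  apply/negP => /eqP e; subst t; move: nw0u.
  have vu : same_comp G v u by rewrite sc_sym; apply: sc_adj.
  by rewrite (sc_trans w0t vu).
have uv : u < v by apply: ltn_trans h2.
case/andP: Ps => p1 p2.
have cr : crn u v s t by apply: crn_of => //; rewrite val_eqE.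
have us := tc_sc ig tc auv ast cr.
have sw0 : same_comp G s w0 by rewrite sc_sym.
by move: nw0u; rewrite sc_sym (sc_trans us sw0).
Qed.

Lemma jump n (G : edgeset n) (a c b : 'I_n) : same_comp G a c -> a < b -> b < c ->
  ~~ same_comp G a b ->
  exists u v, [/\ same_comp G a u, adj G u v, u < b & b < v].
Proof.
move=> ac ab bc nab.
have nc : ~~ (c < b) by rewrite -leqNgt ltnW.
have [u [v [au auv ub vb]]] := @edge_cut _ _ (fun x : 'I_n => x < b) _ _ ac ab nc.
exists u, v; split=> //.
have av : same_comp G a v := sc_trans au (sc_adj auv).
rewrite ltn_neqAle leqNgt vb andbT.
apply/negP => /eqP e.
have bv : b = v by apply: val_inj.
by subst v; rewrite av in nab.
Qed.

Lemma G_nc n (G : edgeset n) : is_graph G -> tightly_closed G -> noncrossing_bond G G.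
Proof.
move=> ig tc; apply/andP; split.
  by apply/andP; split; [exact: subxx | apply/forall_inP => e eG; rewrite eG implybT].
apply/forallP => a; apply/forallP => b; apply/forallP => c; apply/forallP => d.
apply/implyP => /andP[/andP[ab bc] cd]; apply/negP => /and3P[ac bd nab].
have [u [v [au auv ub bv]]] := jump ac ab bc nab.
have nbu : ~~ same_comp G b u.
  by apply/negP => bu; move: nab; rewrite (sc_trans au) // sc_sym.
have nbc : ~~ same_comp G b c.
  by apply/negP => bc'; move: nab; rewrite (sc_trans ac) // sc_sym.
have [s [t [bs ast sc ct]]] := jump bd bc cd nbc.
have ncs : ~~ same_comp G c s.
  apply/negP => cs; move: nab.
  have cb : same_comp G c b by rewrite sc_sym (sc_trans bs) // sc_sym.
  by rewrite (sc_trans ac cb).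
have /andP[us _] := inside ig tc auv ub bv nbu bs.
have cu : same_comp G c u by rewrite sc_sym in ac; apply: sc_trans ac au.
have /andP[su _] := inside ig tc ast sc ct ncs cu.
by move: (ltn_trans us su); rewrite ltnn.
Qed.

Definition mins n (S : edgeset n) : {set 'I_n} :=
  [set u | [forall v, same_comp S u v ==> (u <= v)]].
Definition cc n (S : edgeset n) := #|mins S|.

Lemma minsP n (S : edgeset n) u : reflect (forall v, same_comp S u v -> u <= v) (u \in mins S).
Proof.
rewrite inE; apply: (iffP forallP) => h v; [exact: (implyP (h v)) | exact/implyP/h].
Qed.

Lemma mins_sub n (S T : edgeset n) :
  (forall u v, same_comp S u v -> same_comp T u v) -> mins T \subset mins S.
Proof.
move=> h; apply/subsetP => u /minsP H; apply/minsP => v /h; exact: H.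
Qed.

Lemma exmin n (S : edgeset n) u : exists2 m, same_comp S u m & m \in mins S.
Proof.
case: (arg_minnP (fun v : 'I_n => nat_of_ord v) (sc_refl S u)) => m um H.
exists m => //; apply/minsP => v mv; apply: H; exact: sc_trans um mv.
Qed.

Lemma mins_uniq n (S : edgeset n) m m' :
  m \in mins S -> m' \in mins S -> same_comp S m m' -> m = m'.
Proof.
move=> /minsP h /minsP h' mm; apply: val_inj; apply/eqP; rewrite eqn_leq h //=.
by apply: h'; rewrite sc_sym.
Qed.

Lemma cc_le n (S T : edgeset n) :
  (forall u v, same_comp S u v -> same_comp T u v) -> cc T <= cc S.
Proof. by move=> h; apply: subset_leq_card; apply: mins_sub. Qed.

Lemma cc_lt n (S T : edgeset n) x y :
  (forall u v, same_comp S u v -> same_comp T u v) ->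
  same_comp T x y -> ~~ same_comp S x y -> cc T < cc S.
Proof.
move=> h Txy nSxy; apply: proper_card; rewrite properE mins_sub //=.
have [mx xmx mxm] := exmin S x; have [my ymy mym] := exmin S y.
apply/negP => /subsetP sub.
have e : mx = my.
  apply: (mins_uniq (sub _ mxm) (sub _ mym)).
  apply: sc_trans (h _ _ ymy); apply: sc_trans Txy; rewrite sc_sym; exact: h.
subst my; move: nSxy; rewrite (sc_trans xmx) // sc_sym //.
Qed.

Lemma cc_leqn n (S : edgeset n) : cc S <= n.
Proof. by rewrite /cc; apply: leq_trans (max_card _) _; rewrite card_ord. Qed.

Definition sep n (S : edgeset n) (x y z : 'I_n) : bool :=
  [&& ~~ same_comp S z x, ~~ same_comp S z y &
      [exists z1, exists z2, [&& same_comp S z z1, same_comp S z z2 & crn z1 z2 x y]]].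
Definition sepset n (S : edgeset n) x y := [set z | sep S x y z].

Lemma sepset_sym n (S : edgeset n) x y : sepset S x y = sepset S y x.
Proof.
apply/setP => z; rewrite !inE /sep andbCA; congr (_ && (_ && _)).
apply/existsP/existsP => [] [z1 /existsP[z2 h]]; exists z1; apply/existsP; exists z2;
  by rewrite crn_swap.
Qed.

Lemma nsc1 n (S : edgeset n) (t w x : 'I_n) :
  same_comp S t w -> ~~ same_comp S t x -> nat_of_ord w != x.
Proof. by move=> tw ntx; rewrite val_eqE; apply/negP => /eqP e; subst; rewrite tw in ntx. Qed.

Lemma sep_step n (G S T : edgeset n) (x y z q : 'I_n) :
  noncrossing_bond G S -> noncrossing_bond G T ->
  (forall u v, same_comp S u v -> same_comp T u v) ->
  same_comp T x y -> z \in sepset S x y -> same_comp S q z ->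
  [/\ same_comp T x q, ~~ same_comp S x q & sepset S x q \proper sepset S x y].
Proof.
move=> ncS ncT ST Txy zin qz.
move: (zin); rewrite inE => /and3P[nzx nzy /existsP[z1 /existsP[z2 /and3P[zz1 zz2 crz]]]].
have z1z2 : same_comp S z1 z2 by rewrite sc_sym in zz1; apply: sc_trans zz1 zz2.
have Tz1x := nc_cr ncT crz (ST _ _ z1z2) Txy.
have Txz : same_comp T x z by rewrite sc_sym; exact: (sc_trans (ST _ _ zz1) Tz1x).
have Tzq : same_comp T z q by rewrite sc_sym; exact: ST.
have Txq : same_comp T x q := sc_trans Txz Tzq.
have nxq : ~~ same_comp S x q.
  by apply/negP => xq; move: nzx; rewrite sc_sym (sc_trans xq qz).
split=> //.
have zq : same_comp S z q by rewrite sc_sym.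
rewrite properE; apply/andP; split; last first.
  apply/negP => /subsetP /(_ z zin); by rewrite inE /sep zq /= andbF.
apply/subsetP => w; rewrite !inE => /and3P[nwx nwq /existsP[w1 /existsP[w2 /and3P[ww1 ww2 crw]]]].
have w1w2 : same_comp S w1 w2 by rewrite sc_sym in ww1; apply: sc_trans ww1 ww2.
have nwz : ~~ same_comp S w z by apply/negP => wz; move: nwq; rewrite (sc_trans wz zq).
have nqw1 : ~~ same_comp S q w1.
  apply/negP => qw1; move: nwz.
  have w1w : same_comp S w1 w by rewrite sc_sym.
  by rewrite sc_sym (sc_trans zq (sc_trans qw1 w1w)).
have qz1 : same_comp S q z1 := sc_trans qz zz1.
have ea := side_const ncS qz1 w1w2 nqw1.
have nz1w1 : ~~ same_comp S z1 w1.
  by apply/negP => h; move: nqw1; rewrite (sc_trans qz1 h).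
have crb : crn w1 w2 x z1.
  move: crw; rewrite /crn => /and5P[-> -> _ _ hb].
  have /andP[-> ->] := nsc_neq (sc_refl S z1) w1w2 nz1w1.
  by rewrite -ea.
have ec := side_const ncS z1z2 w1w2 nz1w1.
have /andP[nz2w1 nz2w2] := nsc_neq z1z2 w1w2 nz1w1.
have nw1z1 : ~~ same_comp S w1 z1 by rewrite sc_sym.
have ed := side_const ncS w1w2 z1z2 nw1z1.
have /andP[nw1z1' nw1z2'] := nsc_neq (sc_refl S w1) z1z2 nw1z1.
have /andP[nw2z1' nw2z2'] := nsc_neq w1w2 z1z2 nw1z1.
move: (crz); rewrite /crn => /and5P[nxz1 nxz2 nyz1 nyz2 bz].
have nwy : ~~ same_comp S w y.
  apply/negP => wy.
  have e3 := N3 crb ec nz2w1 nz2w2 ed nw1z1' nw1z2' nw2z1' nw2z2' nxz1 nxz2.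
  have yw1 : same_comp S y w1 by rewrite sc_sym in wy; apply: sc_trans wy ww1.
  have nyz1' : ~~ same_comp S y z1.
    by apply/negP => h; move: nzy; rewrite sc_sym (sc_trans h) // sc_sym.
  have e4 := side_const ncS yw1 z1z2 nyz1'.
  by move: bz; rewrite e3 e4 eqxx.
rewrite /sep nwx nwy /=; apply/existsP; exists w1; apply/existsP; exists w2; rewrite ww1 ww2 /=.
have nyw1 : ~~ same_comp S y w1.
  by apply/negP => h; move: nwy; rewrite sc_sym (sc_trans h) // sc_sym.
have /andP[ny1 ny2] := nsc_neq (sc_refl S y) w1w2 nyw1.
move: (crw); rewrite /crn => /and5P[-> -> _ _ _]; rewrite ny1 ny2 /=.
apply/negP => /eqP eab.
have := N2 crb eab ny1 ny2 ec nz2w1 nz2w2 nxz1 nxz2 nyz1 nyz2.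
by move=> e; move: bz; rewrite e eqxx.
Qed.

Lemma find_pair n (G S T : edgeset n) : is_graph G -> tightly_closed G ->
  noncrossing_bond G S -> noncrossing_bond G T ->
  (forall u v, same_comp S u v -> same_comp T u v) ->
  forall k x y, #|sepset S x y| <= k -> adj G x y -> same_comp T x y -> ~~ same_comp S x y ->
  exists x' y', [/\ adj G x' y', same_comp T x' y', ~~ same_comp S x' y' & sepset S x' y' = set0].
Proof.
move=> ig tc ncS ncT ST; elim=> [|k IH] x y hk axy Txy nxy.
  by exists x, y; split=> //; apply/eqP; rewrite -cards_eq0 -leqn0.
case: (set_0Vmem (sepset S x y)) => [e0|[z zin]]; first by exists x, y.
have SG : S \subset G by case/andP: ncS => /andP[].
move: (zin); rewrite inE => /and3P[nzx nzy /existsP[z1 /existsP[z2 /and3P[zz1 zz2 crz]]]].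
have z1z2 : same_comp S z1 z2 by rewrite sc_sym in zz1; apply: sc_trans zz1 zz2.
have crz' := crn_sym crz.
have bz : btwn x y z1 != btwn x y z2 by move: crz'; case/and5P.
have [a [b [za zb Pa Pb]]] : exists a b, [/\ same_comp S z a, same_comp S z b,
    btwn x y a & ~~ btwn x y b].
  case Ez1: (btwn x y z1) bz => bz.
    by exists z1, z2; split => //; move: bz; case: (btwn x y z2).
  by exists z2, z1; split=> //; [move: bz; case: (btwn x y z2) | rewrite Ez1].
have ab : same_comp S a b by rewrite sc_sym in za; apply: sc_trans za zb.
have [u [v [au auv Pu Pv]]] := @edge_cut _ _ (fun t : 'I_n => btwn x y t) _ _ ab Pa Pb.
have zu : same_comp S z u := sc_trans za au.
have zv : same_comp S z v := sc_trans zu (sc_adj auv).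
have cruv : crn x y u v.
  by rewrite /crn (nsc1 zu nzx) (nsc1 zu nzy) (nsc1 zv nzx) (nsc1 zv nzy) /= Pu (negbTE Pv).
have auvG : adj G u v by case/orP: auv => h; rewrite /adj (subsetP SG _ h) ?orbT.
have step : forall p p' q, adj G p q -> same_comp T p p' -> #|sepset S p p'| <= k.+1 ->
    z \in sepset S p p' -> same_comp S z q -> 
    exists x' y', [/\ adj G x' y', same_comp T x' y', ~~ same_comp S x' y' & sepset S x' y' = set0].
  move=> p p' q apq Tpp' hk' zin' zq.
  have qz : same_comp S q z by rewrite sc_sym.
  have [Tpq npq pr] := sep_step ncS ncT ST Tpp' zin' qz.
  apply: (IH p q) => //.
  by rewrite -ltnS; apply: leq_trans (proper_card pr) hk'.
have Tyx : same_comp T y x by rewrite sc_sym.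
have ayx : adj G y x by rewrite /adj orbC.
have hk2 : #|sepset S y x| <= k.+1 by rewrite sepset_sym.
have zin2 : z \in sepset S y x by rewrite sepset_sym.
case/or4P: (tc_edge ig tc axy auvG cruv) => h.
- exact: step x y u h Txy hk zin zu.
- exact: step x y v h Txy hk zin zv.
- exact: step y x u h Tyx hk2 zin2 zu.
- exact: step y x v h Tyx hk2 zin2 zv.
Qed.

Definition gmap n (S : edgeset n) (x y t : 'I_n) := if same_comp S t y then x else t.
Definition RU n (S : edgeset n) x y u v := same_comp S (gmap S x y u) (gmap S x y v).
Definition Uset n (G S : edgeset n) x y : edgeset n := [set e in G | RU S x y e.1 e.2].

Lemma RU_E n (S : edgeset n) x y u v :
  RU S x y u v = same_comp S u v ||
    ((same_comp S u x || same_comp S u y) && (same_comp S v x || same_comp S v y)).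
Proof.
rewrite /RU /gmap.
case uy: (same_comp S u y); case vy: (same_comp S v y) => /=.
- have yv : same_comp S y v by rewrite sc_sym.
  by rewrite sc_refl (sc_trans uy yv).
- have -> : same_comp S u v = false.
    apply/negP => uv; move: vy; rewrite sc_sym in uv; by rewrite (sc_trans uv uy).
  by rewrite orbT andTb orbF /= sc_sym.
- have -> : same_comp S u v = false.
    by apply/negP => uv; move: uy; rewrite (sc_trans uv vy).
  by rewrite orbT andbT orbF.
- rewrite !orbF; case: (boolP (same_comp S u v)) => //= nuv.
  apply/esym/negP => /andP[ux vx]; move: nuv; rewrite sc_sym in vx.
  by rewrite (sc_trans ux vx).
Qed.

Lemma RU_refl n (S : edgeset n) x y u : RU S x y u u.
Proof. exact: sc_refl. Qed.
Lemma RU_sym n (S : edgeset n) x y u v : RU S x y u v = RU S x y v u.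
Proof. exact: sc_sym. Qed.
Lemma RU_trans n (S : edgeset n) x y u v w : RU S x y u v -> RU S x y v w -> RU S x y u w.
Proof. exact: sc_trans. Qed.

Lemma S_RU n (S : edgeset n) x y u v : same_comp S u v -> RU S x y u v.
Proof. by move=> h; rewrite RU_E h. Qed.

Lemma RU_xy n (S : edgeset n) x y : RU S x y x y.
Proof. by rewrite RU_E !sc_refl /= !orbT. Qed.

Lemma S_sub_U n (G S : edgeset n) x y : S \subset G -> S \subset Uset G S x y.
Proof.
move=> /subsetP SG; apply/subsetP => e eS; rewrite inE SG //=.
by apply: S_RU; apply: sc_adj; rewrite /adj -surjective_pairing eS.
Qed.

Lemma U_sc n (G S : edgeset n) x y u v : S \subset G -> adj G x y ->
  same_comp (Uset G S x y) u v = RU S x y u v.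
Proof.
move=> SG axy; apply/idP/idP.
  apply: connect_equiv; [exact: RU_refl | exact: RU_trans |].
  move=> a b /orP[]; rewrite inE => /andP[_ h] //; by rewrite RU_sym.
have SU := S_sub_U x y SG.
have Uxy : same_comp (Uset G S x y) x y.
  by apply: sc_adj; rewrite /adj !inE RU_xy (RU_sym _ _ _ y x) RU_xy !andbT.
have MU : forall t, same_comp S t x || same_comp S t y -> same_comp (Uset G S x y) t x.
  move=> t /orP[] h; first exact: sc_mono SU h.
  by apply: sc_trans (sc_mono SU h) _; rewrite sc_sym.
rewrite RU_E => /orP[h|/andP[hu hv]]; first exact: sc_mono SU h.
by apply: sc_trans (MU _ hu) _; rewrite sc_sym; apply: MU.
Qed.

Lemma U_bond n (G S : edgeset n) x y : S \subset G -> adj G x y -> bond G (Uset G S x y).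
Proof.
move=> SG axy; apply/andP; split.
  by apply/subsetP => e; rewrite inE => /andP[].
apply/forall_inP => e eG; apply/implyP; rewrite U_sc // => h.
by rewrite inE eG.
Qed.


Lemma nosep n (G S : edgeset n) (x y z1 z2 p q : 'I_n) : noncrossing_bond G S ->
  sepset S x y = set0 -> same_comp S z1 z2 ->
  ~~ (same_comp S z1 x || same_comp S z1 y) ->
  same_comp S p x -> same_comp S q y -> crn z1 z2 p q -> False.
Proof.
move=> nc e0 z12 nM px qy cr.
rewrite negb_or in nM; case/andP: nM => nz1x nz1y.
have xp : same_comp S x p by rewrite sc_sym.
have yq : same_comp S y q by rewrite sc_sym.
have nxz1 : ~~ same_comp S x z1 by rewrite sc_sym.
have nyz1 : ~~ same_comp S y z1 by rewrite sc_sym.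
have e1 := side_const nc xp z12 nxz1.
have e2 := side_const nc yq z12 nyz1.
have /andP[a1 a2] := nsc_neq (sc_refl S x) z12 nxz1.
have /andP[a3 a4] := nsc_neq (sc_refl S y) z12 nyz1.
have : z1 \in sepset S x y.
  rewrite inE /sep nz1x nz1y /=; apply/existsP; exists z1; apply/existsP; exists z2.
  rewrite sc_refl z12 /= /crn a1 a2 a3 a4 e1 e2 /=.
  by move: cr; case/and5P.
by rewrite e0 inE.
Qed.

Lemma split2 n (S : edgeset n) (x y p q : 'I_n) :
  same_comp S p x || same_comp S p y -> same_comp S q x || same_comp S q y ->
  ~~ same_comp S p q ->
  (same_comp S p x && same_comp S q y) || (same_comp S p y && same_comp S q x).
Proof.
move=> /orP[]h1 /orP[]h2 npq; rewrite ?h1 ?h2 ?andbT //=.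
- by move: npq; rewrite sc_sym in h2; rewrite (sc_trans h1 h2).
- by rewrite orbT.
- by move: npq; rewrite sc_sym in h2; rewrite (sc_trans h1 h2).
Qed.

Lemma nosep2 n (G S : edgeset n) (x y z1 z2 p q : 'I_n) : noncrossing_bond G S ->
  sepset S x y = set0 -> same_comp S z1 z2 ->
  ~~ (same_comp S z1 x || same_comp S z1 y) ->
  same_comp S p x || same_comp S p y -> same_comp S q x || same_comp S q y ->
  ~~ same_comp S p q -> crn z1 z2 p q -> False.
Proof.
move=> nc e0 z12 nM Mp Mq npq cr.
case/orP: (split2 Mp Mq npq) => /andP[h1 h2].
  exact: nosep nc e0 z12 nM h1 h2 cr.
by rewrite crn_swap in cr; exact: nosep nc e0 z12 nM h2 h1 cr.
Qed.

Lemma U_nc n (G S : edgeset n) x y : noncrossing_bond G S -> adj G x y ->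
  sepset S x y = set0 -> noncrossing_bond G (Uset G S x y).
Proof.
move=> nc axy e0.
have SG : S \subset G by case/andP: nc => /andP[].
apply/andP; split; first exact: U_bond.
apply/forallP => a; apply/forallP => b; apply/forallP => c; apply/forallP => d.
apply/implyP => /andP[/andP[ab bc] cd]; rewrite !U_sc //.
apply/negP => /and3P[]; rewrite !RU_E negb_or negb_and => Rac Rbd /andP[nab nM].
have /andP[cr1 cr2] := quad_crn ab bc cd.
case/orP: Rac => [ac | /andP[Ma Mc]].
  case/orP: Rbd => [bd | /andP[Mb Md]].
    by move: nab; rewrite (nc_quad nc ab bc cd ac bd).
  have nMa : ~~ (same_comp S a x || same_comp S a y).
    by case/orP: nM => // h; rewrite Mb in h.
  have nbd : ~~ same_comp S b d.
    apply/negP => bd; by move: nab; rewrite (nc_quad nc ab bc cd ac bd).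
  exact: nosep2 nc e0 ac nMa Mb Md nbd cr1.
have nMb : ~~ (same_comp S b x || same_comp S b y).
  by case/orP: nM => // h; rewrite Ma in h.
have bd : same_comp S b d by case/orP: Rbd => // /andP[h _]; rewrite h in nMb.
have nac : ~~ same_comp S a c.
  apply/negP => ac; by move: nab; rewrite (nc_quad nc ab bc cd ac bd).
exact: nosep2 nc e0 bd nMb Ma Mc nac cr2.
Qed.

Lemma U_sub_T n (G S T : edgeset n) x y : bond G T ->
  (forall u v, same_comp S u v -> same_comp T u v) -> same_comp T x y ->
  Uset G S x y \subset T.
Proof.
move=> /andP[_ /forall_inP bT] ST Txy; apply/subsetP => e; rewrite inE => /andP[eG h].
apply: (implyP (bT e eG)).
have MT : forall t, same_comp S t x || same_comp S t y -> same_comp T t x.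
  move=> t /orP[] h'; first exact: ST.
  by apply: sc_trans (ST _ _ h') _; rewrite sc_sym.
move: h; rewrite RU_E => /orP[h|/andP[h1 h2]]; first exact: ST.
by apply: sc_trans (MT _ h1) _; rewrite sc_sym; apply: MT.
Qed.

Lemma cc_U n (G S : edgeset n) x y : S \subset G -> adj G x y ->
  cc S <= (cc (Uset G S x y)).+1.
Proof.
move=> SG axy.
have [mx xmx mxm] := exmin S x; have [my ymy mym] := exmin S y.
pose m0 := if mx < my then my else mx.
have sub : mins S \subset m0 |: mins (Uset G S x y).
  apply/subsetP => u um; rewrite in_setU1; case: (eqVneq u m0) => //= um0.
  apply/minsP => v; rewrite U_sc // RU_E => /orP[h|/andP[hu hv]].
    by move/minsP: um; apply.
  have ule : (u <= mx) && (u <= my).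
    case/orP: hu => h.
      have e : u = mx by apply: mins_uniq um mxm _; exact: sc_trans h xmx.
      move: um0; rewrite /m0 e; case: (ltngtP mx my) => hh //=; rewrite ?eqxx // => _; rewrite ?leqnn /= ?(ltnW hh) //.
    have e : u = my by apply: mins_uniq um mym _; exact: sc_trans h ymy.
    move: um0; rewrite /m0 e; case: (ltngtP mx my) => hh //=; rewrite ?eqxx // => _; rewrite ?leqnn /= ?(ltnW hh) //.
  case/andP: ule => h1 h2.
  case/orP: hv => h.
    apply: leq_trans h1 _; move/minsP: mxm; apply.
    by rewrite sc_sym in xmx; rewrite sc_sym; apply: sc_trans h _; rewrite sc_sym.
  apply: leq_trans h2 _; move/minsP: mym; apply.
  by rewrite sc_sym in ymy; rewrite sc_sym; apply: sc_trans h _; rewrite sc_sym.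
rewrite /cc; apply: leq_trans (subset_leq_card sub) _.
by rewrite cardsU1; case: (_ \notin _).
Qed.

Lemma KL n (G S T : edgeset n) : is_graph G -> tightly_closed G ->
  noncrossing_bond G S -> noncrossing_bond G T -> S \subset T -> S != T ->
  exists U, [/\ noncrossing_bond G U, S \subset U, U != S, U \subset T & cc S <= (cc U).+1].
Proof.
move=> ig tc ncS ncT ST neq.
have ST' : forall u v, same_comp S u v -> same_comp T u v by move=> u v; apply: sc_mono.
have SG : S \subset G by case/andP: ncS => /andP[].
have bS : bond G S by case/andP: ncS.
have bT : bond G T by case/andP: ncT.
have TG : T \subset G by case/andP: bT.
have : S \proper T by rewrite properEneq neq.
case/properP => _ [e eT neS].
have eG := subsetP TG _ eT.
have axy : adj G e.1 e.2 by rewrite /adj -surjective_pairing eG.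
have Txy : same_comp T e.1 e.2 by apply: sc_adj; rewrite /adj -surjective_pairing eT.
have nSxy : ~~ same_comp S e.1 e.2.
  apply/negP => h; case/andP: bS => _ /forall_inP /(_ e eG) /implyP /(_ h).
  by rewrite (negbTE neS).
have [x [y [axy' Txy' nxy' e0]]] := find_pair ig tc ncS ncT ST' (leqnn _) axy Txy nSxy.
exists (Uset G S x y); split.
- exact: U_nc.
- exact: S_sub_U.
- have [f [fG fU fS]] : exists f, [/\ f \in G, f \in Uset G S x y & f \notin S].
    case/orP: (axy') => h.
      exists (x, y); rewrite !inE h RU_xy; split=> //; apply/negP => hS.
      by move: nxy'; rewrite sc_adj // /adj hS.
    exists (y, x); rewrite !inE h RU_sym RU_xy; split=> //; apply/negP => hS.
    by move: nxy'; rewrite sc_adj // /adj hS orbT.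
  by apply/negP => /eqP eU; move: fS; rewrite -eU fU.
- exact: U_sub_T.
- exact: cc_U.
Qed.

Lemma sc0 n (u v : 'I_n) : same_comp (set0 : edgeset n) u v -> u = v.
Proof.
move=> h; apply/eqP; move: h; apply: connect_equiv => [w|a b c /eqP-> //|a b].
- exact: eqxx.
- by rewrite /adj !inE.
Qed.

Lemma empty_nc n (G : edgeset n) : is_graph G -> noncrossing_bond G set0.
Proof.
move=> ig; apply/andP; split.
  apply/andP; split; first exact: sub0set.
  apply/forall_inP => e eG; apply/implyP => /sc0 h.
  by move: (ig e eG); rewrite h ltnn.
apply/forallP => a; apply/forallP => b; apply/forallP => c; apply/forallP => d.
apply/implyP => /andP[/andP[ab bc] _]; apply/negP => /and3P[/sc0 ac _ _].
by move: (ltn_trans ab bc); rewrite ac ltnn.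
Qed.

Lemma cc_strict n (G X Y : edgeset n) : bond G X -> bond G Y -> X \subset Y -> X != Y ->
  cc Y < cc X.
Proof.
move=> bX bY XY neq.
have : X \proper Y by rewrite properEneq neq.
case/properP => _ [e eY neX].
have eG : e \in G by case/andP: bY => /subsetP /(_ e eY).
apply: (@cc_lt _ X Y e.1 e.2).
- by move=> u v; apply: sc_mono.
- by apply: sc_adj; rewrite /adj -surjective_pairing eY.
- apply/negP => h; case/andP: bX => _ /forall_inP /(_ e eG) /implyP /(_ h).
  by rewrite (negbTE neX).
Qed.

Lemma cc_mono n (X Y : edgeset n) : X \subset Y -> cc Y <= cc X.
Proof. by move=> XY; apply: cc_le => u v; apply: sc_mono. Qed.

Lemma chain_add n (G : edgeset n) (C : {set edgeset n}) U :
  NC_maximal_chain G C -> noncrossing_bond G U ->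
  (forall X, X \in C -> (X \subset U) || (U \subset X)) -> U \in C.
Proof.
case/andP=> /andP[/forall_inP ncC /forall_inP cmpC] /forallP maxC ncU cmpU.
have := maxC (U |: C); rewrite subsetUr andbT.
have -> : NC_chain G (U |: C).
  apply/andP; split.
    by apply/forall_inP => X; rewrite in_setU1 => /predU1P[->|/ncC].
  apply/forall_inP => X; rewrite in_setU1 => /predU1P[->|XC];
  apply/forall_inP => Y; rewrite in_setU1 => /predU1P[->|YC].
  - by rewrite subxx.
  - by rewrite orbC; apply: cmpU.
  - exact: cmpU.
  - exact: (forall_inP (cmpC X XC) Y YC).
by move=> /implyP /(_ isT) /eqP <-; rewrite setU11.
Qed.

Definition img n (C : {set edgeset n}) : {set 'I_n.+1} := [set inord (cc X) | X in C].

Lemma img_eq n (G : edgeset n) (C : {set edgeset n}) : is_graph G -> tightly_closed G ->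
  NC_maximal_chain G C ->
  img C = [set k : 'I_n.+1 | (cc G <= k) && (k <= cc (set0 : edgeset n))].
Proof.
move=> ig tc mC.
have mC' := mC; case/andP: mC' => /andP[/forall_inP ncC /forall_inP cmpC] _.
have bC : forall X, X \in C -> bond G X by move=> X /ncC /andP[].
have subG : forall X, X \in C -> X \subset G by move=> X /bC /andP[].
have GC : G \in C.
  by apply: chain_add mC (G_nc ig tc) _ => X XC; rewrite subG.
have EC : set0 \in C.
  by apply: chain_add mC (empty_nc ig) _ => X XC; rewrite sub0set orbT.
have inordK' : forall X : edgeset n, nat_of_ord (inord (cc X) : 'I_n.+1) = cc X.
  by move=> X; rewrite inordK // ltnS cc_leqn.
apply/setP => k; rewrite inE; apply/imsetP/idP.
  case=> X XC ->; rewrite inordK'.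
  by rewrite (cc_mono (subG _ XC)) (cc_mono (sub0set X)).
case/andP=> k1 k2.
case: (boolP [exists X in C, cc X == k]) => [/exists_inP[X XC /eqP e]|none].
  by exists X => //; apply: val_inj; rewrite /= inordK' e.
exfalso.
have nk : forall X, X \in C -> cc X != k.
  by move=> X XC; apply/negP => e; move: none; rewrite negb_exists_in => /forall_inP /(_ X XC); rewrite e.
have P0 : (set0 \in C) && (k < cc (set0 : edgeset n)).
  rewrite EC /= ltn_neqAle k2 andbT.
  by move: (nk _ EC); rewrite eq_sym.
have PG : (G \in C) && (cc G < k) by rewrite GC /= ltn_neqAle k1 andbT nk.
case: (@arg_minnP _ set0 (fun X => (X \in C) && (k < cc X)) (fun X : edgeset n => cc X) P0) => S /andP[SC kS] minS.
case: (@arg_maxnP _ G (fun X => (X \in C) && (cc X < k)) (fun X : edgeset n => cc X) PG) => T /andP[TC Tk] maxT.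
have ST : S \subset T.
  case/orP: (forall_inP (cmpC S SC) T TC) => // TS.
  by move: (cc_mono TS) => h; move: (leq_ltn_trans (leq_trans h (ltnW Tk)) kS); rewrite ltnn.
have nST : S != T.
  by apply/negP => /eqP e; subst T; move: (ltn_trans Tk kS); rewrite ltnn.
have [U [ncU SU nUS UT ccU]] := KL ig tc (ncC _ SC) (ncC _ TC) ST nST.
have bU : bond G U by case/andP: ncU.
have ltU : cc U < cc S by apply: cc_strict (bC _ SC) bU SU _; rewrite eq_sym.
have UC : U \in C.
  apply: chain_add mC ncU _ => X XC.
  case: (ltngtP k (cc X)) => hX; last by move: (nk X XC); rewrite hX eqxx.
  - have le := minS X (introT andP (conj XC hX)).
    case/orP: (forall_inP (cmpC X XC) S SC) => h.
      by rewrite (subset_trans h SU).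
    case: (eqVneq S X) => [<-|ne]; first by rewrite SU.
    by move: (cc_strict (bC _ SC) (bC _ XC) h ne) le => h1 /= h2; move: (leq_trans h1 h2); rewrite ltnn.
  - have le := maxT X (introT andP (conj XC hX)).
    case/orP: (forall_inP (cmpC X XC) T TC) => h; last by rewrite (subset_trans UT h) orbT.
    case: (eqVneq X T) => [->|ne]; first by rewrite UT orbT.
    by move: (cc_strict (bC _ XC) (bC _ TC) h ne) le => h1 /= h2; move: (leq_trans h1 h2); rewrite ltnn.
have kU : k < cc U.
  rewrite ltn_neqAle eq_sym nk //=; rewrite -ltnS; exact: leq_trans kS ccU.
by move: (minS U (introT andP (conj UC kU))); rewrite leqNgt ltU.
Qed.

Lemma card_img n (G : edgeset n) (C : {set edgeset n}) :
  NC_maximal_chain G C -> #|C| = #|img C|.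
Proof.
case/andP=> /andP[/forall_inP ncC /forall_inP cmpC] _.
have bC : forall X, X \in C -> bond G X by move=> X /ncC /andP[].
rewrite /img card_in_imset // => X Y XC YC e.
have e' : cc X = cc Y.
  have := congr1 val e; rewrite /= !inordK // ltnS cc_leqn //.
case: (eqVneq X Y) => // ne.
case/orP: (forall_inP (cmpC X XC) Y YC) => h.
  by move: (cc_strict (bC _ XC) (bC _ YC) h ne); rewrite e' ltnn.
have ne' : Y != X by rewrite eq_sym.
by move: (cc_strict (bC _ YC) (bC _ XC) h ne'); rewrite e' ltnn.
Qed.

Theorem theorem5p15 (n : nat) (G : edgeset n) :
  is_graph G -> tightly_closed G -> NC_graded G.
Proof.
move=> ig tc C1 C2 m1 m2.
by rewrite (card_img m1) (card_img m2) (img_eq ig tc m1) (img_eq ig tc m2).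
Qed.
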